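(* Let $\mathfrak{A}$ be a unital $C^*$-algebra, $\theta,\alpha\in\mathrm{Aut}(\mathfrak{A})$, $u\in\mathfrak{A}$ unitary with $u\,\alpha(\theta(a))=\theta(\alpha(a))u$ for all $a$, and suppose $(\mathfrak{A},\theta)$ is topologically ergodic. For $n\in\mathbb{Z}$ let $W_n:=\{a\in\mathfrak{A}\mid \alpha^{-n}(u_n)\theta(a)=a\}$. Then for each $n$, either $W_n=\{0\}$ or $W_n=\mathbb{C}w_n$ for some unitary $w_n\in\mathfrak{A}$.
   Context: The unitaries $u_n$ are defined by $u_0=I$, $u_n=u\alpha(u)\cdots\alpha^{n-1}(u)$ for $n\ge1$, $u_n=\alpha^{-1}(u^* )\alpha^{-2}(u^* )\cdots\alpha^{n}(u^* )$ for $n<0$. $(\mathfrak{A},\theta)$ topologically ergodic means $\{a\in\mathfrak{A}\mid\theta(a)=a\}=\mathbb{C}I$. *)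

(* Defs.v *)
From mathcomp Require Import all_boot all_order all_algebra.
From mathcomp Require Import reals.
From mathcomp.real_closed Require Import complex.
Import Order.TTheory GRing.Theory Num.Theory.
Set Implicit Arguments.
Unset Strict Implicit.
Unset Printing Implicit Defensive.
Local Open Scope ring_scope.

Record is_unital_Cstar (R : realType) (A : algType R[i])
    (star : A -> A) (nrm : A -> R) : Prop := {
  star_add : forall x y, star (x + y) = star x + star y;
  star_scale : forall (c : R[i]) x, star (c *: x) = c^* *: star x;
  star_mul : forall x y, star (x * y) = star y * star x;
  star_invol : forall x, star (star x) = x;
  nrm_ge0 : forall x, 0 <= nrm x;
  nrm_eq0 : forall x, nrm x = 0 -> x = 0;
  nrm_triangle : forall x y, nrm (x + y) <= nrm x + nrm y;
  nrm_scale : forall (c : R[i]) x, nrm (c *: x) = Normc.normc c * nrm x;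
  nrm_submul : forall x y, nrm (x * y) <= nrm x * nrm y;
  nrm_Cstar : forall x, nrm (star x * x) = nrm x ^+ 2;
  nrm_complete : forall u : nat -> A,
    (forall e : R, 0 < e -> exists N : nat, forall m n : nat,
        (N <= m)%N -> (N <= n)%N -> nrm (u m - u n) < e) ->
    exists l : A, forall e : R, 0 < e -> exists N : nat, forall n : nat,
        (N <= n)%N -> nrm (u n - l) < e
}.

Definition is_star_aut (R : realType) (A : algType R[i]) (star : A -> A)
    (theta : A -> A) : Prop :=
  (forall x y, theta (x + y) = theta x + theta y) /\
  (forall (c : R[i]) x, theta (c *: x) = c *: theta x) /\
  (forall x y, theta (x * y) = theta x * theta y) /\
  theta 1 = 1 /\
  (forall x, theta (star x) = star (theta x)) /\
  bijective theta.

Definition unitary_elt (R : realType) (A : algType R[i]) (star : A -> A)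
    (u : A) : Prop := star u * u = 1 /\ u * star u = 1.

Definition top_ergodic (R : realType) (A : algType R[i]) (theta : A -> A)
    : Prop :=
  forall a : A, theta a = a <-> exists c : R[i], a = c%:A.

Definition aut_pow (A : Type) (alpha alpha_inv : A -> A) (n : int) : A -> A :=
  match n with
  | Posz m => iter m alpha
  | Negz m => iter m.+1 alpha_inv
  end.

(* The cocycle u_n:  u_0 = 1,
   u_n = u alpha(u) ... alpha^{n-1}(u)  for n >= 1,
   u_n = alpha^{-1}(u^* ) alpha^{-2}(u^* ) ... alpha^{n}(u^* )  for n < 0. *)
Definition cocycle (R : realType) (A : algType R[i]) (star : A -> A)
    (alpha alpha_inv : A -> A) (u : A) (n : int) : A :=
  match n with
  | Posz m => \prod_(k < m) aut_pow alpha alpha_inv (Posz k) u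
  | Negz m => \prod_(k < m.+1) aut_pow alpha alpha_inv (- (Posz k.+1)) (star u)
  end.

Definition W_space (R : realType) (A : algType R[i]) (star : A -> A)
    (theta alpha alpha_inv : A -> A) (u : A) (n : int) : A -> Prop :=
  fun a => aut_pow alpha alpha_inv (- n) (cocycle star alpha alpha_inv u n)
             * theta a = a.

(* Main.v *)
Require Import Defs.
From mathcomp Require Import all_boot all_order all_algebra.
From mathcomp Require Import reals.
From mathcomp.real_closed Require Import complex.
From mathcomp Require Import ring lra.
From Stdlib Require Import Classical.
Import Order.TTheory GRing.Theory Num.Theory.
Set Implicit Arguments.
Unset Strict Implicit.
Unset Printing Implicit Defensive.
Local Open Scope ring_scope.

Section Basic.
Variables (R : realType) (A : algType R[i]) (star : A -> A) (nrm : A -> R).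
Hypothesis HA : is_unital_Cstar star nrm.

Lemma star0 : star 0 = 0.
Proof.
have := star_add HA 0 0; rewrite addr0 => /eqP; rewrite -subr_eq0.
by rewrite opprD addrA subrr add0r oppr_eq0 => /eqP.
Qed.

Lemma starN x : star (- x) = - star x.
Proof.
by apply/eqP; rewrite -subr_eq0 opprK -(star_add HA) addNr star0.
Qed.

Lemma starB x y : star (x - y) = star x - star y.
Proof. by rewrite (star_add HA) starN. Qed.

Lemma star1 : star 1 = 1.
Proof.
have h := star_mul HA (star 1) 1.
have e : star (star 1) = 1 := star_invol HA 1.
rewrite e mulr1 in h.
by rewrite -h e.
Qed.

Lemma starZr (r : R) x : star ((r%:C)%C *: x) = (r%:C)%C *: star x.
Proof. by rewrite (star_scale HA) conj_Creal //; apply/complex_realP; exists r. Qed.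

Lemma nrm0 : nrm 0 = 0.
Proof. by have := nrm_scale HA 0 0; rewrite scale0r Normc.normc0 mul0r. Qed.

Lemma normc_real (r : R) : Normc.normc ((r%:C)%C) = `|r|.
Proof. by rewrite /Normc.normc /= expr0n /= addr0 sqrtr_sqr. Qed.

Lemma nrmZr (r : R) x : nrm ((r%:C)%C *: x) = `|r| * nrm x.
Proof. by rewrite (nrm_scale HA) normc_real. Qed.

Lemma nrmN x : nrm (- x) = nrm x.
Proof.
have -> : - x = ((-1 : R)%:C)%C *: x by rewrite rmorphN rmorph1 scaleN1r.
by rewrite nrmZr normrN normr1 mul1r.
Qed.

Lemma nrm_eq0' x : nrm x = 0 -> x = 0.
Proof. exact: (nrm_eq0 HA). Qed.

Lemma nrm_star x : nrm (star x) = nrm x.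
Proof.
have le1 y : nrm y <= nrm (star y).
  have h := nrm_Cstar HA y.
  have := nrm_submul HA (star y) y; rewrite h expr2.
  have [->|yn] := eqVneq (nrm y) 0; first by rewrite (nrm_ge0 HA).
  have yp : 0 < nrm y by rewrite lt0r yn (nrm_ge0 HA).
  by rewrite ler_pM2r.
apply/eqP; rewrite eq_le le1 andbT.
by have := le1 (star x); rewrite (star_invol HA).
Qed.

Lemma nrm1 : nrm 1 = 1.
Proof.
have := nrm_Cstar HA 1; rewrite star1 mulr1 expr2 => h.
have n0 : nrm 1 != 0.
  apply/eqP => /nrm_eq0' /eqP; by rewrite oner_eq0.
by apply: (mulfI n0); rewrite mulr1 -h.
Qed.

Lemma nrmD x y : nrm (x + y) <= nrm x + nrm y.
Proof. exact: (nrm_triangle HA). Qed.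
Lemma nrmM x y : nrm (x * y) <= nrm x * nrm y.
Proof. exact: (nrm_submul HA). Qed.
Lemma nrm_ge0' x : 0 <= nrm x.
Proof. exact: (nrm_ge0 HA). Qed.
Lemma nrmB_sym x y : nrm (x - y) = nrm (y - x).
Proof. by rewrite -nrmN opprB. Qed.

Definition hlf : R[i] := (((2 : R)^-1)%:C)%C.

Lemma nrm_hlf x : nrm (hlf *: x) = 2^-1 * nrm x.
Proof. by rewrite /hlf nrmZr ger0_norm // invr_ge0. Qed.

Lemma star_hlf x : star (hlf *: x) = hlf *: star x.
Proof. exact: starZr. Qed.

Lemma hlf2 (x : A) : hlf *: x + hlf *: x = x.
Proof.
rewrite -scalerDl /hlf -rmorphD /=.
have -> : (2 : R)^-1 + 2^-1 = 1 by rewrite -mulr2n -[_ *+ 2]mulr_natl mulfV // pnatr_eq0.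
by rewrite rmorph1 scale1r.
Qed.

Lemma small0 X : (forall e : R, 0 < e -> nrm X <= e) -> X = 0.
Proof.
move=> H; apply: nrm_eq0'.
have [//|n0] := eqVneq (nrm X) 0.
have p : 0 < nrm X by rewrite lt0r n0 nrm_ge0'.
have := H (nrm X / 2) (divr_gt0 p (ltr0Sn _ 1)).
rewrite ler_pdivlMr // => h; lra.
Qed.

Section Sqrt.
Variable a : A.
Hypothesis sa : star a = a.
Hypothesis na : nrm a <= 1.

Fixpoint yy (k : nat) : A :=
  if k is k'.+1 then hlf *: (a + yy k' * yy k') else 0.
Fixpoint tau (k : nat) : R :=
  if k is k'.+1 then 2^-1 * (1 + tau k' ^+ 2) else 0.

Lemma yy_comm x : x * a = a * x -> forall k, x * yy k = yy k * x.
Proof.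
move=> xa; elim=> [|k IH] /=; first by rewrite mulr0 mul0r.
by rewrite -scalerAr -scalerAl mulrDr mulrDl xa mulrA IH -!mulrA IH.
Qed.

Lemma yy_comm2 j k : yy j * yy k = yy k * yy j.
Proof. apply: (yy_comm (x := yy j)); symmetry; exact: (yy_comm (x := a)). Qed.

Lemma yy_sa k : star (yy k) = yy k.
Proof.
elim: k => [|k IH] /=; first exact: star0.
by rewrite star_hlf (star_add HA) (star_mul HA) IH sa.
Qed.

Lemma tau_bnd k : 0 <= tau k <= 1.
Proof.
elim: k => [|k IH] /=; first by rewrite lexx ler01.
case/andP: IH => t0 t1.
apply/andP; split; first by rewrite mulr_ge0 // ?invr_ge0 // addr_ge0 // sqr_ge0.
rewrite ler_pdivrMl // mulr1 -[2]/(1 + 1) lerD2l.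
by rewrite expr_le1.
Qed.

Lemma yy_bnd k : nrm (yy k) <= tau k.
Proof.
elim: k => [|k IH] /=; first by rewrite nrm0 lexx.
rewrite nrm_hlf ler_pM2l ?invr_gt0 //.
apply: (le_trans (nrmD _ _)); apply: lerD => //.
apply: (le_trans (nrmM _ _)); rewrite expr2.
by apply: ler_pM => //; apply: nrm_ge0'.
Qed.

Lemma yy_step k : nrm (yy k.+1 - yy k) <= tau k.+1 - tau k.
Proof.
elim: k => [|k IH].
  rewrite /= !subr0 mulr0 addr0 nrm_hlf expr0n /= addr0 mulr1.
  by rewrite -[X in _ <= X]mulr1 ler_pM2l ?invr_gt0.
have -> : yy k.+2 - yy k.+1 = hlf *: ((yy k.+1 - yy k) * (yy k.+1 + yy k)).
  change (hlf *: (a + yy k.+1 * yy k.+1) - hlf *: (a + yy k * yy k) = hlf *: ((yy k.+1 - yy k) * (yy k.+1 + yy k))).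
  rewrite -scalerBr; congr (_ *: _).
  rewrite mulrBl !mulrDr (yy_comm2 k k.+1) addrKA.
  by rewrite opprD addrA [a + _]addrC addrK.
have -> : tau k.+2 - tau k.+1 = 2^-1 * ((tau k.+1 - tau k) * (tau k.+1 + tau k)).
  by rewrite [tau k.+2]/= [tau k.+1]/=; ring.
rewrite nrm_hlf ler_pM2l ?invr_gt0 //.
apply: (le_trans (nrmM _ _)); apply: ler_pM => //; try apply: nrm_ge0'.
by apply: (le_trans (nrmD _ _)); apply: lerD; apply: yy_bnd.
Qed.

Lemma yy_cauchy n m : (n <= m)%N -> nrm (yy m - yy n) <= tau m - tau n.
Proof.
move=> /subnKC <-; elim: (m - n)%N => [|d IH].
  by rewrite addn0 !subrr nrm0.
rewrite addnS.
have -> : yy (n + d).+1 - yy n = (yy (n + d).+1 - yy (n+d)) + (yy (n + d) - yy n).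
  by rewrite addrA subrK.
have -> : tau (n + d).+1 - tau n = (tau (n + d).+1 - tau (n+d)) + (tau (n + d) - tau n) by ring.
apply: (le_trans (nrmD _ _)); apply: lerD => //; exact: yy_step.
Qed.

Lemma tau_conv k : 1 - tau k <= 2 / (k%:R + 2).
Proof.
elim: k => [|k IH]; first by rewrite /= subr0 mulr0n add0r divff // pnatr_eq0.
have /andP[t0 t1] := tau_bnd k.
set e := 1 - tau k in IH *.
have -> : 1 - tau k.+1 = e - e ^+ 2 / 2 by rewrite /e /=; field.
move: IH; set b := (X in e <= X) => IH.
have k0 : 0 <= k%:R :> R by [].
have hb : b * (k%:R + 2) = 2 by rewrite /b mulfVK // gt_eqF // ltr_wpDl.
have -> : (k.+1%:R + 2 : R) = k%:R + 3 by rewrite -addn1 natrD; ring.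
rewrite ler_pdivlMr ?ltr_wpDl //.
have e0 : 0 <= e by rewrite /e subr_ge0.
have e1 : e <= 1 by rewrite /e lerBlDr lerDl.
have b0 : 0 <= b by rewrite /b divr_ge0 // addr_ge0.
have b1 : b <= 1 by nra.
have fe : e - e ^+ 2 / 2 <= b - b ^+ 2 / 2 by nra.
have k3 : 0 <= k%:R + 3 :> R by lra.
apply: (le_trans (ler_wpM2r k3 fe)).
have -> : (b - b ^+ 2 / 2) * (k%:R + 3) = 2 - b ^+ 2 / 2.
  have hb' : b * (k%:R + 3) = 2 + b by lra.
  rewrite mulrBl hb'. rewrite (_ : b ^+ 2 / 2 * (k%:R + 3) = b * (2 + b) / 2); last first.
    by rewrite -hb'; ring.
  by field.
have : 0 <= b ^+ 2 by apply: sqr_ge0.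
lra.
Qed.

Lemma yy_ce (e : R) : 0 < e -> exists N : nat, forall m n : nat,
  (N <= m)%N -> (N <= n)%N -> nrm (yy m - yy n) < e.
Proof.
move=> e0; exists (Num.Def.archi_bound (2 / e)).
set N := Num.Def.archi_bound _.
have hN : 2 / e < N%:R by apply: archi_boundP; rewrite divr_ge0 // ltW.
have key n m : (N <= n)%N -> (n <= m)%N -> nrm (yy m - yy n) < e.
  move=> Nn nm.
  apply: (le_lt_trans (yy_cauchy nm)).
  have /andP[_ tm] := tau_bnd m.
  have tc := tau_conv n.
  have nN : N%:R <= n%:R :> R by rewrite ler_nat.
  have n2 : 0 < n%:R + 2 :> R by rewrite ltr_wpDl.
  have : 2 / (n%:R + 2) < e.
    rewrite ltr_pdivrMr //.
    move: hN; rewrite ltr_pdivrMr // => hN.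
    nra.
  lra.
move=> m n Nm Nn; case: (leqP n m) => [nm|/ltnW mn]; first exact: key.
by rewrite nrmB_sym; apply: key.
Qed.

Lemma sqrt_ex : exists m, [/\ star m = m, m * m = 1 - a &
   forall x, x * a = a * x -> x * m = m * x].
Proof.
have [L HL] := nrm_complete HA yy_ce.
have two0 : (0 : R) < 2 by [].
have sL : star L = L.
  apply/eqP; rewrite -subr_eq0; apply/eqP; apply: small0 => e e0.
  have [N HN] := HL (e / 2) (divr_gt0 e0 two0).
  have h1 := HN N (leqnn N).
  have -> : star L - L = star (L - yy N) + (yy N - L).
    by rewrite starB yy_sa addrA subrK.
  apply: (le_trans (nrmD _ _)); rewrite nrm_star nrmB_sym; lra.
have cL x : x * a = a * x -> x * L = L * x.
  move=> xa; apply/eqP; rewrite -subr_eq0; apply/eqP; apply: small0 => e e0.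
  have nx := nrm_ge0' x.
  have d0 : 0 < e / (2 * nrm x + 1) by rewrite divr_gt0 // ltr_wpDl // mulr_ge0.
  have [N HN] := HL _ d0.
  have h1 := HN N (leqnn N).
  have -> : x * L - L * x = (yy N - L) * x - x * (yy N - L).
    rewrite mulrBl mulrBr (yy_comm xa N) opprB addrC.
    by rewrite [RHS]addrC addrA subrK addrC.
  apply: (le_trans (nrmD _ _)); rewrite nrmN.
  have hA := nrmM (yy N - L) x; have hB := nrmM x (yy N - L).
  have nd := nrm_ge0' (yy N - L).
  have : (2 * nrm x + 1) * nrm (yy N - L) <= e.
    rewrite mulrC -ler_pdivlMr ?ltr_wpDl ?mulr_ge0 //; exact: ltW.
  nra.
have fL : L = hlf *: (a + L * L).
  apply/eqP; rewrite -subr_eq0; apply/eqP; apply: small0 => e e0.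
  have nL := nrm_ge0' L.
  have d0 : 0 < e / (2 + nrm L) by rewrite divr_gt0 // ltr_pwDl.
  have [N HN] := HL _ d0.
  have h1 := HN N (leqnn N); have h2 := HN N.+1 (leqnSn N).
  have -> : L - hlf *: (a + L * L) =
     - (yy N.+1 - L) + hlf *: (yy N * (yy N - L) + (yy N - L) * L).
    rewrite mulrBr mulrBl addrA subrK.
    change (yy N.+1) with (hlf *: (a + yy N * yy N)).
    rewrite opprB -addrA; congr (_ + _).
    rewrite -!scalerN -scalerDr; congr (_ *: _).
    by rewrite !opprD -addrA addKr.
  apply: (le_trans (nrmD _ _)); rewrite nrmN nrm_hlf.
  have hyN := le_trans (yy_bnd N) (proj2 (andP (tau_bnd N))).
  have hA := nrmM (yy N) (yy N - L); have hB := nrmM (yy N - L) L.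
  have hC := nrmD (yy N * (yy N - L)) ((yy N - L) * L).
  have nd := nrm_ge0' (yy N - L).
  have ny := nrm_ge0' (yy N).
  have : (2 + nrm L) * nrm (yy N - L) <= e.
    rewrite mulrC -ler_pdivlMr ?ltr_pwDl //; exact: ltW.
  have : (2 + nrm L) * nrm (yy N.+1 - L) <= e.
    rewrite mulrC -ler_pdivlMr ?ltr_pwDl //; exact: ltW.
  nra.
have hLL : L * L = L + L - a.
  by rewrite [X in X + _ - _]fL [X in _ + X - _]fL hlf2 addrC addKr.
exists (1 - L); split.
- by rewrite starB star1 sL.
- rewrite !mulrBl !mulrBr !mul1r ?mulr1 hLL.
  by rewrite opprB [L + L - a - L]addrAC addrK addrA subrK.
- by move=> x xa; rewrite mulrBr mulrBl mulr1 mul1r cL.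
Qed.
End Sqrt.

Lemma starstar x : star (star x) = x.
Proof. exact: (star_invol HA). Qed.
Lemma starD x y : star (x + y) = star x + star y.
Proof. exact: (star_add HA). Qed.
Lemma starM x y : star (x * y) = star y * star x.
Proof. exact: (star_mul HA). Qed.

Lemma star_t0 t : star t * t = 0 -> t = 0.
Proof.
move=> h; apply: nrm_eq0'; have := nrm_Cstar HA t; rewrite h nrm0 => /esym /eqP.
by rewrite sqrf_eq0 => /eqP.
Qed.

Lemma starCi x : star ('i *: x) = - ('i *: star x).
Proof. by rewrite (star_scale HA) conjCi scaleNr. Qed.

Lemma two_neq0 (x : A) : x + x = 0 -> x = 0.
Proof.
move=> h; have : ((2 : R)%:C)%C *: x = 0.
  by rewrite (_ : ((2 : R)%:C)%C = 2%:R) ?rmorph_nat // scaler_nat mulr2n.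
move/eqP; rewrite scaler_eq0 => /orP[|/eqP//].
by rewrite (_ : ((2 : R)%:C)%C = 2%:R) ?rmorph_nat // pnatr_eq0.
Qed.

Lemma sa_sq y : star y = y -> y * y = -1 -> False.
Proof.
move=> sy yy1.
set t := y + 'i *: 1.
have st : star t = y - 'i *: 1 by rewrite /t starD starCi star1 sy.
have : star t * t = 0.
  rewrite st mulrBl !mulrDr yy1 -scalerAr -scalerAl mulr1 mul1r -scalerAr mulr1.
  rewrite scalerA -expr2 sqrCi scaleN1r.
  by apply/eqP; rewrite subr_eq0 addrC.
move/star_t0 => t0.
have yE : y = - ('i *: 1) by apply/eqP; rewrite -subr_eq0 opprK; apply/eqP.
have : 'i *: (1 : A) + 'i *: 1 = 0.
  have := sy; rewrite yE starN starCi star1 opprK => e.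
  by rewrite [X in X + _]e addNr.
move/two_neq0/eqP; rewrite scaler_eq0 oner_eq0 orbF.
by rewrite (negPf (neq0Ci _)).
Qed.

Lemma nrm_unit z : star z * z = -1 -> nrm z = 1.
Proof.
move=> h; have := nrm_Cstar HA z; rewrite h nrmN nrm1 => /eqP.
rewrite eq_sym sqrf_eq1 => /orP[/eqP//|/eqP n1].
by have := nrm_ge0' z; rewrite n1 ler0N1.
Qed.

Lemma no_neg z : star z * z = -1 -> z * star z = -1 -> False.
Proof.
move=> h1 h2.
set s := star z.
set p := z + s; set q := z - s.
have sp : star p = p by rewrite /p starD starstar addrC.
have sq : star q = - q by rewrite /q starB starstar opprB.
have hp : p * p = z * z + s * s - (1 + 1).
  rewrite /p mulrDl !mulrDr h1 h2.
  by rewrite opprD [-1 + _]addrC addrACA.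
have hq : q * q = z * z + s * s + (1 + 1).
  rewrite /q mulrBl !mulrBr h1 h2.
  by rewrite opprB !opprK addrACA.
have pq : p * q = q * p.
  rewrite /p /q mulrDl mulrBl !mulrBr !mulrDr h1 h2.
  by rewrite opprK opprD opprK addrACA.
pose c4 : R[i] := (((4 : R)^-1)%:C)%C.
set a := - (c4 *: (p * p)).
have sa : star a = a by rewrite /a starN starZr starM sp.
have nz : nrm z = 1 by apply: nrm_unit.
have na : nrm a <= 1.
  rewrite /a nrmN nrmZr ger0_norm ?invr_ge0 //.
  have np : nrm p <= 2.
    apply: (le_trans (nrmD _ _)); rewrite nrm_star nz; lra.
  have := nrmM p p; have := nrm_ge0' p; have := nrm_ge0' (p * p).
  move=> *; rewrite ler_pdivrMl //; nra.
clearbody p q.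
have [m [sm mm cm]] := sqrt_ex sa na.
have qa : q * a = a * q.
  rewrite /a mulrN mulNr -scalerAr -scalerAl; congr (- (_ *: _)).
  by rewrite mulrA -pq -mulrA -pq mulrA.
have mq := cm q qa.
set n := m + m.
have sn : star n = n by rewrite /n starD sm.
have nq : n * q = q * n by rewrite /n mulrDl [q * _]mulrDr mq.
have nn : n * n = q * q.
  rewrite /n mulrDl !mulrDr mm /a opprK hq.
  have -> : forall X : A, X + X + (X + X) = X *+ 4.
    by move=> X; rewrite -mulr2n -mulr2n -mulrnA.
  rewrite mulrnDl -[X in _ + X]scaler_nat scalerA (_ : 4%:R * c4 = 1); last first.
    by rewrite /c4 fmorphV rmorph_nat mulfV // pnatr_eq0.
  rewrite scale1r hp.
  have four : (4%:R : A) = (1 + 1) + (1 + 1) by rewrite -mulr2n -mulr2n -mulrnA.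
  by rewrite addrC -addrA four addKr.
clearbody n.
have t0 : star (n + q) * (n + q) = 0.
  rewrite starD sn sq mulrDr !mulrDl nn !mulNr nq addrACA [q * q + _]addrC.
  by rewrite -opprD subrr.
have nq0 := star_t0 t0.
have nq1 : n - q = 0 by rewrite -sn -sq -starD nq0 star0.
have q0 : q = 0.
  apply: two_neq0.
  have e : (n + q) - (n - q) = q + q by rewrite opprB addrC addrA subrK.
  by rewrite -e nq0 nq1 subrr.
apply: (@sa_sq (((2 : R)^-1)%:C%C *: p)).
  by rewrite starZr sp.
have four : (4%:R : A) = (1 + 1) + (1 + 1) by rewrite -mulr2n -mulr2n -mulrnA.
have pp : p * p = - 4%:R.
  move: hq; rewrite q0 mul0r hp => /eqP; rewrite eq_sym addr_eq0 => /eqP ->.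
  by rewrite -opprD four.
rewrite -scalerAl -scalerAr scalerA pp -scaler_nat scalerN scalerA.
rewrite -rmorphM -(rmorph_nat (real_complex R)) -rmorphM /=.
rewrite (_ : 2^-1 / 2 * 4 = 1 :> R); last by field.
by rewrite rmorph1 scale1r.
Qed.

Lemma mulA1 (c : R[i]) (y : A) : c%:A * y = c *: y.
Proof. by rewrite -scalerAl mul1r. Qed.
Lemma mul1A (c : R[i]) (y : A) : y * c%:A = c *: y.
Proof. by rewrite -scalerAr mulr1. Qed.

Lemma scal1_inj (c d : R[i]) : c%:A = d%:A :> A -> c = d.
Proof.
move=> /eqP; rewrite -subr_eq0 -scalerBl scaler_eq0 oner_eq0 orbF subr_eq0.
by move/eqP.
Qed.

Lemma star_scal (c : R[i]) : star (c%:A) = (c^*)%:A.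
Proof. by rewrite (star_scale HA) star1. Qed.

Lemma mainM (theta beta gam : A -> A) (Q : A)
  (Ht : is_star_aut star theta) (Herg : top_ergodic theta)
  (bmul : forall x y, beta (x * y) = beta x * beta y)
  (bstar : forall x, beta (star x) = star (beta x))
  (gb : forall x, gam (beta x) = x) (bg : forall x, beta (gam x) = x)
  (gmul : forall x y, gam (x * y) = gam x * gam y)
  (gstar : forall x, gam (star x) = star (gam x))
  (g1 : gam 1 = 1)
  (gscal : forall c, gam (c%:A) = c%:A)
  (Qu1 : star Q * Q = 1) (Qu2 : Q * star Q = 1)
  (hc : forall y, theta (beta y) = Q * beta (theta y) * star Q) :
  let v := gam Q in
  (forall a : A, v * theta a = a -> a = 0) \/
  (exists w : A, unitary_elt star w /\
     forall a : A, v * theta a = a <-> exists c : R[i], a = c *: w).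
Proof.
move=> v.
case: Ht => tadd [tscal [tmul [t1 [tstar _]]]].
have vu1 : star v * v = 1 by rewrite /v -gstar -gmul Qu1 g1.
have vu2 : v * star v = 1 by rewrite /v -gstar -gmul Qu2 g1.
have bv : beta v = Q by rewrite /v bg.
case: (classic (exists a, v * theta a = a /\ a <> 0)); last first.
  move=> nex; left => a Wa; apply: NNPP => a0; apply: nex; by exists a.
case=> a [Wa a0].
have ta : theta a = star v * a by rewrite -[in RHS]Wa mulrA vu1 mul1r.
have fixb b : v * theta b = b -> exists e, star a * b = e%:A.
  move=> Wb; apply/Herg.
  have tb : theta b = star v * b by rewrite -[in RHS]Wb mulrA vu1 mul1r.
  by rewrite tmul tstar ta tb starM starstar -mulrA [v * _]mulrA vu2 mul1r.
have [c hc1] := fixb a Wa.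
have [d hd] : exists d, a * star a = d%:A.
  have : theta (beta (a * star a)) = beta (a * star a).
    rewrite hc tmul tstar !bmul !bstar -bv.
    by rewrite mulrA -mulrA -starM -bmul Wa.
  case/Herg => d hd; exists d.
  by rewrite -[a * star a]gb hd gscal.
have cd : c = d.
  have : a * (star a * a) = (a * star a) * a by rewrite mulrA.
  rewrite hc1 hd mul1A mulA1 => /eqP; rewrite -subr_eq0 -scalerBl scaler_eq0.
  by rewrite subr_eq0 (negPf (introN eqP a0)) orbF => /eqP.
subst d.
have c0 : c != 0.
  apply/eqP => c0; apply: a0; apply: star_t0; by rewrite hc1 c0 scale0r.
have creal : c \is Num.real.
  rewrite CrealE; apply/eqP; apply: scal1_inj.
  by rewrite -star_scal -hc1 starM starstar.
have ck (k : R[i]) : k \is Num.real -> star (k *: a) * (k *: a) = (k * k * c)%:A /\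
    (k *: a) * star (k *: a) = (k * k * c)%:A.
  move=> kr; rewrite (star_scale HA) conj_Creal //.
  by split; rewrite -scalerAl -scalerAr ?hc1 ?hd !scalerA.
have [cneg|cpos] : c < 0 \/ 0 < c.
  by case: (real_ltgtP creal (real0 _)) => h; [left|right|move: c0; rewrite h eqxx].
- exfalso.
  set k := (sqrtC (- c))^-1.
  have kr : k \is Num.real by rewrite realV ger0_real // sqrtC_ge0 oppr_ge0 ltW.
  have kk : k * k * c = -1.
    rewrite /k -invfM -expr2 sqrtCK invrN mulNr mulVf //.
  have [e1 e2] := ck k kr; apply: (@no_neg (k *: a)).
    by rewrite e1 kk scaleN1r.
  by rewrite e2 kk scaleN1r.
- set k := (sqrtC c)^-1.
  have kr : k \is Num.real by rewrite realV ger0_real // sqrtC_ge0 ltW.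
  have kk : k * k * c = 1.
    by rewrite /k -invfM -expr2 sqrtCK mulVf.
  have k0 : k != 0 by rewrite invr_eq0 sqrtC_eq0.
  have [e1 e2] := ck k kr.
  right; exists (k *: a); split; first by split; rewrite ?e1 ?e2 kk scale1r.
  move=> b; split.
    move=> Wb; have [e he] := fixb b Wb.
    exists (e / c / k).
    have : a * (star a * b) = a * e%:A by rewrite he.
    rewrite mulrA hd mulA1 mul1A scalerA => hb.
    apply: (scalerI c0); rewrite hb !scalerA; congr (_ *: _).
    by rewrite divfK // mulrC divfK.
  case=> e ->; rewrite scalerA tscal -scalerAr.
  by rewrite Wa.
Qed.

Lemma iter_cocycle (theta f : A -> A) (x : A)
  (fmul : forall a b, f (a * b) = f a * f b) (f1 : f 1 = 1)
  (fstar : forall a, f (star a) = star (f a))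
  (xu1 : star x * x = 1) (xu2 : x * star x = 1)
  (base : forall y, theta (f y) = x * f (theta y) * star x) (j : nat) :
  let Q := \prod_(k < j) iter k f x in
  [/\ star Q * Q = 1, Q * star Q = 1 &
      forall y, theta (iter j f y) = Q * iter j f (theta y) * star Q].
Proof.
elim: j => [|j [IH1 IH2 IH3]] /=.
  by rewrite big_ord0 star1 mulr1; split => // y; rewrite mul1r mulr1.
have QE : \prod_(k < j.+1) iter k f x = x * f (\prod_(k < j) iter k f x).
  rewrite big_ord_recl /=; congr (_ * _).
  by rewrite (big_morph f fmul f1).
rewrite QE; set Q := \prod_(k < j) iter k f x in IH1 IH2 IH3 *.
have sxf : star (x * f Q) = f (star Q) * star x by rewrite starM fstar.
split.
- by rewrite sxf -mulrA [star x * _]mulrA xu1 mul1r -fmul IH1.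
- by rewrite sxf -mulrA [f Q * _]mulrA -fmul IH2 f1 mul1r.
- move=> y; rewrite base IH3 !fmul sxf.
  by rewrite !mulrA.
Qed.

Lemma iter_mul (f : A -> A) (fmul : forall a b, f (a * b) = f a * f b) j a b :
  iter j f (a * b) = iter j f a * iter j f b.
Proof. by elim: j => //= j ->; rewrite fmul. Qed.
Lemma iter_star (f : A -> A) (fstar : forall a, f (star a) = star (f a)) j a :
  iter j f (star a) = star (iter j f a).
Proof. by elim: j => //= j ->; rewrite fstar. Qed.
Lemma iter_can (f g : A -> A) (fg : cancel f g) j a : iter j g (iter j f a) = a.
Proof.
elim: j a => [//|j IH] a.
by rewrite [iter j.+1 f a]iterSr iterS IH fg.
Qed.
End Basic.

Unset Implicit Arguments.

Theorem mainTheorem7 (R : realType) (A : algType R[i])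
  (star : A -> A) (nrm : A -> R) (HA : is_unital_Cstar star nrm)
  (theta alpha alpha_inv : A -> A)
  (Htheta : is_star_aut star theta) (Halpha : is_star_aut star alpha)
  (Halpha_inv1 : cancel alpha alpha_inv) (Halpha_inv2 : cancel alpha_inv alpha)
  (u : A) (Hu : unitary_elt star u)
  (Hcomm : forall a : A, u * alpha (theta a) = theta (alpha a) * u)
  (Herg : top_ergodic theta) :
  forall n : int,
    (forall a : A, W_space star theta alpha alpha_inv u n a -> a = 0) \/
    (exists w : A, unitary_elt star w /\
       forall a : A, W_space star theta alpha alpha_inv u n a <->
                     exists c : R[i], a = c *: w).
Proof.
move=> n.
have Ht := Htheta.
case: Htheta => tadd [tscal [tmul [t1 [tstar _]]]].
case: Halpha => aadd [ascal [amul [a1 [astar _]]]].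
case: Hu => u1 u2.
have ainj := can_inj Halpha_inv1.
have aimul x y : alpha_inv (x * y) = alpha_inv x * alpha_inv y.
  by apply: ainj; rewrite amul !Halpha_inv2.
have ai1 : alpha_inv 1 = 1 by apply: ainj; rewrite a1 Halpha_inv2.
have aistar x : alpha_inv (star x) = star (alpha_inv x).
  by apply: ainj; rewrite astar !Halpha_inv2.
have aiscal (c : R[i]) x : alpha_inv (c *: x) = c *: alpha_inv x.
  by apply: ainj; rewrite ascal !Halpha_inv2.
have baseA y : theta (alpha y) = u * alpha (theta y) * star u.
  by rewrite Hcomm -mulrA u2 mulr1.
have baseI y : theta (alpha_inv y) =
    alpha_inv (star u) * alpha_inv (theta y) * star (alpha_inv (star u)).
  rewrite -aistar (star_invol HA) -!aimul; apply: ainj; rewrite Halpha_inv2.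
  have h := baseA (alpha_inv y); rewrite Halpha_inv2 in h.
  by rewrite h !mulrA u1 mul1r -mulrA u1 mulr1.
have apw j y : aut_pow alpha alpha_inv (- Posz j) y = iter j alpha_inv y.
  by case: j => [//|j]; rewrite -NegzE.
have iscal (f : A -> A) (fs : forall (c : R[i]) x, f (c *: x) = c *: f x)
    (f1 : f 1 = 1) j (c : R[i]) : iter j f (c%:A) = c%:A.
  by elim: j => //= j ->; rewrite fs f1.
have iter1 (f : A -> A) (f1 : f 1 = 1) j : iter j f 1 = 1.
  by elim: j => //= j ->.
have conclude (P : A -> Prop) (v : A) : (forall a, P a <-> v * theta a = a) ->
    ((forall a : A, v * theta a = a -> a = 0) \/
     (exists w : A, unitary_elt star w /\
       forall a : A, v * theta a = a <-> exists c : R[i], a = c *: w)) ->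
    (forall a : A, P a -> a = 0) \/
    (exists w : A, unitary_elt star w /\
       forall a : A, P a <-> exists c : R[i], a = c *: w).
  move=> e [H|[w [wu Hw]]]; [left => a /e; exact: H|right; exists w; split=> // a].
  by split => [/e/Hw|/Hw/e].
case: n => j.
- set Q := \prod_(k < j) iter k alpha u.
  have [Qu1 Qu2 hc] := iter_cocycle HA amul a1 astar u1 u2 baseA j.
  apply: (@conclude _ (iter j alpha_inv Q)).
    by move=> a; rewrite /W_space apw.
  apply: (mainM HA Ht Herg (iter_mul amul j) (iter_star astar j)
     (iter_can Halpha_inv1 j) (iter_can Halpha_inv2 j) (iter_mul aimul j)
     (iter_star aistar j) (iter1 _ ai1 j) (iscal _ aiscal ai1 j) Qu1 Qu2 hc).
- set x := alpha_inv (star u).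
  have xu1 : star x * x = 1 by rewrite /x -aistar (star_invol HA) -aimul u2 ai1.
  have xu2 : x * star x = 1 by rewrite /x -aistar (star_invol HA) -aimul u1 ai1.
  set Q := \prod_(k < j.+1) iter k alpha_inv x.
  have [Qu1 Qu2 hc] := iter_cocycle HA aimul ai1 aistar xu1 xu2 baseI j.+1.
  apply: (@conclude _ (iter j.+1 alpha Q)).
    move=> a; rewrite /W_space.
    have -> : cocycle star alpha alpha_inv u (Negz j) = Q.
      rewrite /Q /=; apply: eq_bigr => k _.
      by rewrite /x -iterSr.
    by rewrite NegzE opprK.
  apply: (mainM HA Ht Herg (iter_mul aimul j.+1) (iter_star aistar j.+1)
     (iter_can Halpha_inv2 j.+1) (iter_can Halpha_inv1 j.+1) (iter_mul amul j.+1)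
     (iter_star astar j.+1) (iter1 _ a1 j.+1) (iscal _ ascal a1 j.+1) Qu1 Qu2 hc).
Qed.
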